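(* Let $r\ge 3$ be an integer and $p\ge 5$ an odd prime. Let $e_0=1$, $e_i=\zeta_{2^r}^i+\zeta_{2^r}^{-i}$ ($i\ge1$), $n_1=2^{r-2}$, $b_j=\zeta_p^j+\zeta_p^{-j}$ ($j\ge1$), $n_2=\frac{p-1}{2}$, and let $\mathbb{K}=\mathbb{Q}(\zeta_{2^r}+\zeta_{2^r}^{-1})\,\mathbb{Q}(\zeta_p+\zeta_p^{-1})$. Let $\mathcal{I}\subseteq\mathcal{O}_{\mathbb{K}}$ be the $\mathbb{Z}$-module with $\mathbb{Z}$-basis consisting of all products $e_ib_j$ ($0\le i\le n_1-1$, $1\le j\le n_2$) except that $e_0b_{n_2}$ is replaced by $2e_0b_{n_2}$. Then $\mathcal{I}$ is not an ideal of $\mathcal{O}_{\mathbb{K}}$.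
   Context: $\zeta_m=e^{2\pi i/m}$. *)

(* Defs.v *)
From HB Require Import structures.
From mathcomp Require Import all_boot all_order all_algebra all_field.
Set Implicit Arguments. Unset Strict Implicit. Unset Printing Implicit Defensive.
Import Order.TTheory GRing.Theory Num.Theory.
Local Open Scope ring_scope.

(* Ambient field: algC (algebraic complex numbers), with conjugation and order.
   n.-root (-1) is the n-th root of -1 with minimal nonnegative argument,
   i.e. exp(i*pi/n); its square is zeta_n = exp(2*pi*i/n). *)
Definition zeta (m : nat) : algC := (m.-root (-1)) ^+ 2.

Definition zsum (m k : nat) : algC := zeta m ^+ k + (zeta m)^-1 ^+ k.

Definition e_ (r i : nat) : algC := if i == 0%N then 1 else zsum (2 ^ r) i.
Definition b_ (p j : nat) : algC := zsum p j.

Definition n1 (r : nat) : nat := (2 ^ (r - 2))%N.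
Definition n2 (p : nat) : nat := ((p - 1) %/ 2)%N.

(* K = Q(e_1) Q(b_1) = Q(e_1, b_1): smallest subfield of algC containing e_1, b_1 *)
Definition inK (r p : nat) (x : algC) : Prop :=
  forall S : divringClosed algC, e_ r 1 \in S -> b_ p 1 \in S -> x \in S.

Definition inOK (r p : nat) (x : algC) : Prop := inK r p x /\ x \in Aint.

(* generator of I indexed by i in [0, n1-1] and j' = j-1, j in [1, n2];
   e_0 b_{n2} is replaced by 2 e_0 b_{n2} *)
Definition Igen (r p : nat) (i : 'I_(n1 r)) (j : 'I_(n2 p)) : algC :=
  (if (val i == 0%N) && (j.+1 == n2 p) then 2 else 1) * e_ r i * b_ p j.+1.

Definition inI (r p : nat) (x : algC) : Prop :=
  exists c : 'I_(n1 r) -> 'I_(n2 p) -> int,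
    x = \sum_(i < n1 r) \sum_(j < n2 p) Igen i j *~ c i j.

Definition is_ideal_of (R J : algC -> Prop) : Prop :=
  (forall x, J x -> R x) /\ J 0 /\
  (forall x y, J x -> J y -> J (x - y)) /\
  (forall a x, R a -> J x -> J (a * x)).

(* Main.v *)
Require Import Defs.
From HB Require Import structures.
From mathcomp Require Import all_boot all_order all_algebra all_field.
From mathcomp Require Import zify ring.
Set Implicit Arguments. Unset Strict Implicit. Unset Printing Implicit Defensive.
Import Order.TTheory GRing.Theory Num.Theory.
Local Open Scope ring_scope.

Lemma zeta_pow m : (0 < m)%N -> zeta m ^+ m = 1.
Proof.
move=> m0; rewrite /zeta exprAC rootCK //; by rewrite expr2 mulrNN mulr1.
Qed.

Lemma one_neqN1 : (1 : algC) != -1.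
Proof. by rewrite -subr_eq0 opprK -(natrD _ 1 1) pnatr_eq0. Qed.

Lemma zeta_neq1 m : (1 < m)%N -> zeta m != 1.
Proof.
move=> m1; rewrite /zeta sqrf_eq1; apply/norP; split.
  apply/eqP => h; have /= := @rootCK algC m (ltnW m1) (-1).
  by rewrite h expr1n => /eqP; rewrite (negbTE one_neqN1).
apply/eqP => h; move: (@rootC_lt0 algC m (-1) m1); rewrite h.
by rewrite ltrN10.
Qed.

Lemma zeta_order_prime p e : prime p -> (zeta p ^+ e == 1) = (p %| e)%N.
Proof.
move=> pp; have p0 := prime_gt0 pp.
have [m pm mp] := prim_order_exists p0 (zeta_pow p0).
have: (m == 1)%N || (m == p).
  case/primeP: pp => _ Hd; exact: Hd.
case/orP => /eqP em.
  subst m; have := prim_expr_order pm; rewrite expr1 => h.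
  by have := zeta_neq1 (prime_gt1 pp); rewrite h eqxx.
by subst m; rewrite (prim_order_dvd pm).
Qed.

Lemma zeta2_half r : (0 < r)%N -> zeta (2 ^ r) ^+ (2 ^ (r - 1)) = -1.
Proof.
move=> r0; rewrite /zeta -exprM -expnS subn1 prednK //; exact: (@rootCK algC _ (expn_gt0 2 r) (-1)).
Qed.

Lemma zeta2_order r e : (0 < r)%N -> (zeta (2 ^ r) ^+ e == 1) = (2 ^ r %| e)%N.
Proof.
move=> r0; have p0 : (0 < 2 ^ r)%N by rewrite expn_gt0.
have [m pm mp] := prim_order_exists p0 (zeta_pow p0).
have [s sr ms] := elimT (@dvdn_pfactor 2 m r isT) mp; subst m.
have [sr'|] := ltnP s r.
  have : (2 ^ s %| 2 ^ (r - 1))%N by rewrite dvdn_exp2l //; lia.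
  rewrite (prim_order_dvd pm) zeta2_half // => /eqP h.
  by move: h => /(congr1 (fun x => -x)); rewrite opprK => /eqP; rewrite (negbTE one_neqN1).
move=> rs; have es : s = r by apply/eqP; rewrite eqn_leq sr rs.
rewrite es in pm.
by rewrite (prim_order_dvd pm).
Qed.

Lemma geom0 (w : algC) n : w ^+ n = 1 -> w != 1 -> \sum_(t < n) w ^+ t = 0.
Proof.
move=> wn w1; have := subrX1 w n; rewrite wn subrr => /esym /eqP.
by rewrite mulf_eq0 subr_eq0 (negbTE w1) /= => /eqP.
Qed.
Lemma ar1 n j : (j < n)%N -> (n + 1 + (2*n+1 - 1) * j.+1 = (2*n+1) * j.+1 + (n - j))%N.
Proof. move=> jn. rewrite addnK. nia. Qed.
Lemma ar2 n : (2 <= n)%N -> (n + 1 + (1 + (2*n+1 - 1) * (n - 1)) = (2*n+1) * (n - 1) + 3)%N.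
Proof. move=> h. rewrite addnK. nia. Qed.
Lemma ar3 n : (2 <= n)%N -> (n + 1 + ((2*n+1 - 1) * 1 + (n - 1)) = (2*n+1) * 1 + (2 * n - 1))%N.
Proof. move=> h. lia. Qed.
Lemma ar4 n : (2 <= n)%N -> (n + 1 + ((2*n+1 - 1) * 1 + (2*n+1 - 1) * (n - 1)) = (2*n+1) * n + 1)%N.
Proof. move=> h. rewrite addnK. nia. Qed.

Definition bz (z : algC) (m : nat) := z ^+ m + z^-1 ^+ m.

Lemma inv_root (z : algC) p : (0 < p)%N -> z ^+ p = 1 -> z^-1 = z ^+ (p - 1).
Proof.
move=> p0 zp; have z0 : z != 0.
  apply/negP => /eqP z0; move: zp; rewrite z0 expr0n (negbTE (lt0n_neq0 p0)) /= => /eqP.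
  by rewrite eq_sym oner_eq0.
apply: (mulfI z0); rewrite mulfV // -exprS subn1 prednK //.
Qed.

Lemma bzE z p m : (0 < p)%N -> z ^+ p = 1 -> bz z m = z ^+ m + z ^+ ((p - 1) * m).
Proof. by move=> p0 zp; rewrite /bz (inv_root p0 zp) -exprM. Qed.

Lemma sumT p e : prime p ->
  \sum_(k < p) (zeta p ^+ k) ^+ e = if (p %| e)%N then p%:R else 0.
Proof.
move=> pp; have p0 := prime_gt0 pp.
rewrite (eq_bigr (fun k : 'I_p => (zeta p ^+ e) ^+ k)); last by move=> k _; rewrite exprAC.
case: ifP => pe.
  have -> : zeta p ^+ e = 1 by apply/eqP; rewrite zeta_order_prime.
  rewrite (eq_bigr (fun _ => 1)) => [|k _]; last by rewrite expr1n.
  by rewrite sumr_const card_ord.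
apply: geom0; first by rewrite exprAC zeta_pow // expr1n.
by rewrite zeta_order_prime // pe.
Qed.

Lemma ndvd p q s : (0 < s < p)%N -> ~~ (p %| p * q + s)%N.
Proof.
move=> /andP[s0 sp]; rewrite dvdn_addr ?dvdn_mulr //.
by apply/negP => /(dvdn_leq s0); rewrite leqNgt sp.
Qed.

Lemma stepC p (c : 'I_(n2 p) -> int) : prime p -> (5 <= p)%N ->
  b_ p 1 * b_ p (n2 p - 1) =
  \sum_(j < n2 p) ((if j.+1 == n2 p then 2 else 1) * b_ p j.+1) *~ c j -> False.
Proof.
move=> pp p5.
have p0 := prime_gt0 pp.
have op : odd p by case: (even_prime pp) => // p2; move: p5; rewrite p2.
have pn : p = (2 * n2 p + 1)%N.
  by move: (odd_double_half p); rewrite op /= -divn2 -muln2 /n2; clear c; lia.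
move=> H.
move: c H pn; set n := n2 p => c H pn.
clearbody n.
have n2 : (2 <= n)%N by lia.
pose coef (j : 'I_n) : algC := if j.+1 == n then 2 else 1.
pose D z := \sum_(j < n) (coef j * bz z j.+1) *~ c j - bz z 1 * bz z (n - 1).
have HD : forall k, (0 < k < p)%N -> D (zeta p ^+ k) = 0.
  move=> k /andP[k0 kp].
  have cop : coprime k p.
    by rewrite coprime_sym prime_coprime //; apply/negP => /(dvdn_leq k0); lia.
  have [u Du] := Qn_aut_exists cop.
  have uZ : u (zeta p) = zeta p ^+ k by apply: Du; exact: zeta_pow.
  have ub m : u (b_ p m) = bz (zeta p ^+ k) m.
    by rewrite /b_ /zsum rmorphD !(rmorphXn u m) fmorphV uZ.
  have := congr1 u H; rewrite rmorphM !ub rmorph_sum /= => HH.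
  rewrite /D /= HH; apply/eqP; rewrite subr_eq0; apply/eqP; apply: eq_bigr => j _.
  rewrite rmorphMz rmorphM ub /coef; by case: ifP; rewrite ?rmorph_nat ?rmorph1.
have [w wE] : exists w : nat, w = (n + 1)%N by exists (n + 1)%N.
have S1 : \sum_(k < p) (zeta p ^+ k) ^+ w * D (zeta p ^+ k) = D 1.
  rewrite (bigD1 (Ordinal p0)) //= expr0 expr1n mul1r big1 ?addr0 //.
  move=> [k kp] /= kne; rewrite HD ?mulr0 //; rewrite kp andbT lt0n.
  by apply: contra kne => /eqP k0; apply/eqP/val_inj; rewrite /= k0.
have zpk : forall k : 'I_p, (zeta p ^+ k) ^+ p = 1.
  by move=> k; rewrite exprAC zeta_pow // expr1n.
have Dexp : forall z, z ^+ p = 1 -> z ^+ w * D z =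
  \sum_(j < n) (coef j * (z ^+ (w + j.+1) + z ^+ (w + (p - 1) * j.+1))) *~ c j
  - (z ^+ (w + (1 + (n - 1))) + z ^+ (w + (1 + (p - 1) * (n - 1)))
     + z ^+ (w + ((p - 1) * 1 + (n - 1))) + z ^+ (w + ((p - 1) * 1 + (p - 1) * (n - 1)))).
  move=> z zp; rewrite /D /= /bz (inv_root p0 zp) -!exprM mulrBr mulr_sumr; congr (_ - _).
    apply: eq_bigr => j _; rewrite mulrzAr; congr (_ *~ _); rewrite !exprD !exprM; ring.
  rewrite !exprD !exprM; ring.
have Hj : forall j : 'I_n, (p %| w + j.+1)%N = (j.+1 == n).
  move=> [j jn] /=; case: eqP => hj.
    rewrite hj; have -> : (w + n = p)%N by rewrite wE pn; lia.
    exact: dvdnn.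
  apply/negbTE; have := @ndvd p 0 (w + j.+1); rewrite muln0 add0n; apply.
  rewrite wE; apply/andP; split; lia.
have Hj2 : forall j : 'I_n, ~~ (p %| w + (p - 1) * j.+1)%N.
  move=> [j jn] /=; have -> : (w + (p - 1) * j.+1 = p * j.+1 + (n - j))%N.
    by rewrite wE pn; apply: ar1.
  apply: ndvd; apply/andP; split; lia.
have e1 : (p %| w + (1 + (n - 1)))%N.
  by have -> : (w + (1 + (n - 1)) = p)%N by rewrite wE pn; lia.
have e2 : ~~ (p %| w + (1 + (p - 1) * (n - 1)))%N.
  have -> : (w + (1 + (p - 1) * (n - 1)) = p * (n - 1) + 3)%N by rewrite wE pn; apply: ar2.
  apply: ndvd; apply/andP; split; lia.
have e3 : ~~ (p %| w + ((p - 1) * 1 + (n - 1)))%N.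
  have -> : (w + ((p - 1) * 1 + (n - 1)) = p * 1 + (2 * n - 1))%N by rewrite wE pn; apply: ar3.
  apply: ndvd; apply/andP; split; lia.
have e4 : ~~ (p %| w + ((p - 1) * 1 + (p - 1) * (n - 1)))%N.
  have -> : (w + ((p - 1) * 1 + (p - 1) * (n - 1)) = p * n + 1)%N by rewrite wE pn; apply: ar4.
  apply: ndvd; apply/andP; split; lia.
move: S1; rewrite (eq_bigr _ (fun k _ => Dexp _ (zpk k))) sumrB exchange_big /=.
rewrite (eq_bigr (fun j : 'I_n =>
   (coef j * ((if j.+1 == n then p%:R else 0) + 0)) *~ c j)); last first.
  by move=> j _; rewrite -mulrz_suml -mulr_sumr big_split /= !sumT // Hj (negbTE (Hj2 j)).
rewrite !big_split /= !sumT // e1 (negbTE e2) (negbTE e3) (negbTE e4) !addr0.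
rewrite /D /=.
have b1 m : bz 1 m = 1 + 1 by rewrite /bz invr1 !expr1n.
rewrite !b1.
pose A : int := \sum_(j < n) (if j.+1 == n then (p%:Z * c j) else 0).
pose B : int := \sum_(j < n) ((if j.+1 == n then 2 else 1) * c j).
have L : \sum_(i < n) (coef i * ((if i.+1 == n then p%:R else 0) + 0)) *~ c i - p%:R
    = (2 * A - p%:Z)%:~R :> algC.
  rewrite rmorphB rmorphM rmorph_sum /= mulr_sumr; congr (_ - _).
  apply: eq_bigr => j _; rewrite /coef; case: ifP => _; rewrite -mulrzr.
    by rewrite rmorphM /=; ring.
  by rewrite !(mul0r, mulr0, add0r, addr0, rmorph0).
have R : \sum_(i < n) (coef i * bz 1 i.+1) *~ c i - (1 + 1) * (1 + 1)
    = (2 * B - 4)%:~R :> algC.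
  rewrite rmorphB rmorphM rmorph_sum /= mulr_sumr; congr (_ - _); last by ring.
  apply: eq_bigr => j _; rewrite /coef b1 -mulrzr rmorphM /=; case: ifP => _; ring.
rewrite L R => /intr_inj.
move: pn; clear; lia.
Qed.

Definition Ee (x : algC) (i : nat) : algC := if i == 0%N then 1 else x ^+ i + x^-1 ^+ i.

Lemma cop_k r p t : prime p -> odd p -> coprime (1 + 2 * p * t) (2 ^ r * p).
Proof.
move=> pp op; rewrite coprimeMr; apply/andP; split.
  apply: coprimeXr; rewrite coprime_sym coprime2n oddD /= !oddM //.
have -> : (1 + 2 * p * t = 2 * t * p + 1)%N by rewrite addnC -mulnA [(p * t)%N]mulnC mulnA.
by rewrite -coprime_modl modnMDl coprime_modl coprime1n.
Qed.

Lemma sumE r p (y : algC) i : (2 <= r)%N -> odd p ->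
  (forall m, (y ^+ m == 1) = (2 ^ r %| m)%N) -> (0 < i < 2 ^ (r - 2))%N ->
  \sum_(t < 2 ^ (r - 1)) (y ^+ (1 + 2 * p * t)) ^+ i = 0.
Proof.
move=> r2 op Hy /andP[i0 ir].
have r0 : (0 < r)%N by lia.
rewrite (eq_bigr (fun t : 'I_(2 ^ (r - 1)) => y ^+ i * (y ^+ (2 * p * i)) ^+ t)); last first.
  move=> t _; rewrite -!exprM -exprD; congr (_ ^+ _).
  by rewrite mulnDl mul1n -!mulnA [(t * i)%N]mulnC.
rewrite -mulr_sumr geom0 ?mulr0 //.
  apply/eqP; rewrite -exprM Hy.
  have -> : (2 ^ r = 2 * 2 ^ (r - 1))%N by rewrite -expnS subn1 prednK.
  by rewrite -!mulnA dvdn_pmul2l // mulnA dvdn_mull.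
rewrite Hy.
have -> : (2 ^ r = 2 * 2 ^ (r - 1))%N by rewrite -expnS subn1 prednK.
rewrite -mulnA dvdn_pmul2l // Gauss_dvdr; last by apply: coprimeXl; rewrite coprime2n.
apply/negP => /(dvdn_leq i0).
have -> : (2 ^ (r - 1) = 2 * 2 ^ (r - 2))%N.
  have -> : (r - 1 = (r - 2).+1)%N by lia.
  by rewrite expnS.
move: ir; rewrite -[(2 ^ (r - 2))%N]/(2 ^ (r - 2))%N; move: (2 ^ (r - 2))%N => a; lia.
Qed.

Lemma n1_gt0 r : (0 < n1 r)%N.
Proof. by rewrite /n1 expn_gt0. Qed.

Lemma stepB r p (c : 'I_(n1 r) -> 'I_(n2 p) -> int) : (3 <= r)%N -> prime p -> (5 <= p)%N ->
  b_ p 1 * b_ p (n2 p - 1) = \sum_(i < n1 r) \sum_(j < n2 p) Igen i j *~ c i j ->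
  b_ p 1 * b_ p (n2 p - 1) =
  \sum_(j < n2 p) ((if j.+1 == n2 p then 2 else 1) * b_ p j.+1) *~ c (Ordinal (n1_gt0 r)) j.
Proof.
move=> r3 pp p5 H.
have op : odd p by case: (even_prime pp) => // p2; move: p5; rewrite p2.
have r0 : (0 < r)%N by lia.
have r2 : (2 <= r)%N by lia.
have p0 := prime_gt0 pp.
pose M := (2 ^ (r - 1))%N.
pose Ge (x : algC) := \sum_(i < n1 r) \sum_(j < n2 p)
   ((if (val i == 0%N) && (j.+1 == n2 p) then 2 else 1) * Ee x i * b_ p j.+1) *~ c i j.
have HG : forall t, b_ p 1 * b_ p (n2 p - 1) = Ge (zeta (2 ^ r) ^+ (1 + 2 * p * t)).
  move=> t; have [u Du] := Qn_aut_exists (cop_k r t pp op).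
  have uE : u (zeta (2 ^ r)) = zeta (2 ^ r) ^+ (1 + 2 * p * t).
    by apply: Du; rewrite exprM zeta_pow ?expn_gt0 // expr1n.
  have uZ : u (zeta p) = zeta p.
    rewrite Du; last by rewrite mulnC exprM zeta_pow // expr1n.
    by rewrite exprD expr1 -mulnA mulnCA exprM zeta_pow // expr1n mulr1.
  have ub m : u (b_ p m) = b_ p m by rewrite /b_ /zsum rmorphD !(rmorphXn u m) fmorphV uZ.
  have ue i : u (e_ r i) = Ee (zeta (2 ^ r) ^+ (1 + 2 * p * t)) i.
    rewrite /e_ /Ee; case: (i == 0%N); first exact: rmorph1.
    by rewrite /zsum rmorphD !(rmorphXn u i) fmorphV uE.
  have := congr1 u H; rewrite rmorphM !ub rmorph_sum /= => ->.
  apply: eq_bigr => i _; rewrite rmorph_sum; apply: eq_bigr => j _.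
  rewrite rmorphMz /Igen !rmorphM ub ue; congr (_ * _ * _ *~ _).
  by case: ifP; rewrite ?rmorph_nat ?rmorph1.
have HS : (b_ p 1 * b_ p (n2 p - 1)) *+ M = \sum_(i < n1 r) \sum_(j < n2 p)
   ((if (val i == 0%N) && (j.+1 == n2 p) then 2 else 1) *
     (\sum_(t < M) Ee (zeta (2 ^ r) ^+ (1 + 2 * p * t)) i) * b_ p j.+1) *~ c i j.
  have -> : (b_ p 1 * b_ p (n2 p - 1)) *+ M = \sum_(t < M) Ge (zeta (2 ^ r) ^+ (1 + 2 * p * t)).
    by rewrite -[in LHS](card_ord M) -sumr_const; apply: eq_bigr => t _; exact: HG.
  rewrite /Ge exchange_big; apply: eq_bigr => i _; rewrite exchange_big; apply: eq_bigr => j _.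
  by rewrite -mulrz_suml -mulr_suml -mulr_sumr.
have SE : forall i : 'I_(n1 r), \sum_(t < M) Ee (zeta (2 ^ r) ^+ (1 + 2 * p * t)) i
    = if val i == 0%N then M%:R else 0.
  move=> [i ir] /=; rewrite /Ee; case: eqP => i0.
    by rewrite (eq_bigr (fun _ => 1)) // sumr_const card_ord.
  rewrite big_split /=.
  under [X in _ + X]eq_bigr => t _ do rewrite -exprVn.
  have ir' : (0 < i < 2 ^ (r - 2))%N by rewrite lt0n; apply/andP; split => //; apply/eqP.
  rewrite (@sumE r p _ i) //; last by move=> m; rewrite zeta2_order.
  rewrite (@sumE r p _ i) ?addr0 //.
  by move=> m; rewrite exprVn invr_eq1 zeta2_order.
rewrite (bigD1 (Ordinal (n1_gt0 r))) // [X in _ = X]addrC big1 ?add0r in HS; last first.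
  move=> i ine; apply: big1 => j _; rewrite SE.
  have -> : (val i == 0%N) = false.
    by apply/negbTE; apply: contra ine => /eqP i0; apply/eqP/val_inj; rewrite /= i0.
  by rewrite mulr0 mul0r mul0rz.
rewrite SE /= in HS.
have M0 : (M%:R : algC) != 0 by rewrite pnatr_eq0 -lt0n expn_gt0.
apply: (mulfI M0); rewrite mulr_natl HS mulr_sumr; apply: eq_bigr => j _.
by rewrite mulrzAr; congr (_ *~ _); rewrite -mulrA mulrCA.
Qed.

Theorem proposition3p5 (r p : nat) :
  (3 <= r)%N -> prime p -> (5 <= p)%N ->
  ~ is_ideal_of (inOK r p) (inI r p).
Proof.
move=> r3 pp p5 [_ [_ [_ Hmul]]].
have p0 := prime_gt0 pp.
have n2ge : (2 <= n2 p)%N by rewrite /n2; lia.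
have j0lt : (n2 p - 2 < n2 p)%N by lia.
pose j0 := Ordinal j0lt.
pose i0 := Ordinal (n1_gt0 r).
have Ix : inI r p (b_ p (n2 p - 1)).
  exists (fun i j => if (i == i0) && (j == j0) then 1 else 0).
  rewrite (bigD1 i0) // [X in _ = X]addrC big1 ?add0r; last first.
    move=> i ine; apply: big1 => j _; by rewrite (negbTE ine) mulr0z.
  rewrite (bigD1 j0) //= big1 ?addr0; last first.
    by move=> j jne; rewrite (negbTE jne) mulr0z.
  rewrite !eqxx mulr1z /Igen /e_ /=.
  have -> : ((n2 p - 2).+1 == n2 p) = false by apply/eqP; lia.
  have -> : (n2 p - 2).+1 = (n2 p - 1)%N by lia.
  by rewrite !mul1r.
have Ha : inOK r p (b_ p 1).
  split; first by move=> S _ hb.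
  have A1 : zeta p \in Aint by apply: (Aint_unity_root p0); rewrite unity_rootE zeta_pow.
  have A2 : (zeta p)^-1 \in Aint.
    by apply: (Aint_unity_root p0); rewrite unity_rootE exprVn zeta_pow // invr1.
  by rewrite /b_ /zsum rpredD // rpredX.
have [c H] := Hmul _ _ Ha Ix.
exact: (stepC pp p5 (stepB r3 pp p5 H)).
Qed.
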